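(* If a Riordan matrix $(g,f)$ has a type-I $B$-sequence, then it belongs to $R_{0,2}$, the set of Riordan matrices whose $A$-sequence $(a_j)_{j\ge0}$ satisfies $a_0=1$ and $a_2=0$ (which is a subgroup of the Riordan group).
   Context: Let $K$ be $\mathbb{R}$ or $\mathbb{C}$. A (proper) Riordan matrix is a pair $(g,f)$ of formal power series in $K[[t]]$ with $g(0)=1$, $f(0)=0$, $f'(0)\neq 0$, identified with the infinite lower triangular matrix $(d_{n,k})_{n,k\ge0}$, $d_{n,k}=[t^n]g(t)f(t)^k$; we set $d_{n,k}=0$ if $n<0$, $k<0$ or $k>n$. The $A$-sequence $(a_j)_{j\ge0}$ is the unique sequence whose generating function $A(t)$ satisfies $f(t)=tA(f(t))$. A type-I $B$-sequence of $(g,f)$ is a sequence $(b_j)_{j\ge0}$ such that $d_{n+1,k}=d_{n,k-1}+\sum_{j\ge0}b_j d_{n-j,k+j}$ for all $n\ge0$ and $k\ge1$. *)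

(* Defs.v *)
From HB Require Import structures.
From mathcomp Require Import all_boot all_order all_algebra.
Set Implicit Arguments. Unset Strict Implicit. Unset Printing Implicit Defensive.
Import Order.TTheory GRing.Theory Num.Theory.
Local Open Scope ring_scope.

(* A formal power series sum_n s n t^n is represented by its coefficient sequence. *)
Definition fps (K : Type) := nat -> K.

Definition fps_mul (K : nzRingType) (p q : fps K) : fps K :=
  fun n => \sum_(i < n.+1) p i * q (n - i)%N.

Definition fps_one (K : nzRingType) : fps K := fun n => if n == 0%N then 1 else 0.

Fixpoint fps_exp (K : nzRingType) (f : fps K) (k : nat) : fps K :=
  match k with
  | 0 => fps_one K
  | k'.+1 => fps_mul f (fps_exp f k')
  end.

Definition is_riordan (K : nzRingType) (g f : fps K) : Prop :=
  g 0%N = 1 /\ f 0%N = 0 /\ f 1%N != 0.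

(* Entries d_{n,k} = [t^n] g(t) f(t)^k of the Riordan matrix (g, f).
   For k > n this is automatically 0 since f(0) = 0. *)
Definition riordan_entry (K : nzRingType) (g f : fps K) (n k : nat) : K :=
  fps_mul g (fps_exp f k) n.

(* a is the A-sequence of f:  f(t) = t A(f(t)), i.e. coefficientwise
   f_0 = 0 and f_{n+1} = sum_j a_j [t^n] f(t)^j; since f(0)=0, f^j has order
   >= j, so only j <= n contribute. *)
Definition is_Aseq (K : nzRingType) (f : fps K) (a : nat -> K) : Prop :=
  f 0%N = 0 /\
  forall n : nat, f n.+1 = \sum_(j < n.+1) a j * fps_exp f j n.

(* b is a type-I B-sequence of (g, f):
   d_{n+1,k} = d_{n,k-1} + sum_{j>=0} b_j d_{n-j,k+j}  for all n >= 0, k >= 1,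
   where d_{m,l} = 0 for m < 0, so only j <= n contribute. *)
Definition is_typeI_Bseq (K : nzRingType) (g f : fps K) (b : nat -> K) : Prop :=
  forall n k : nat, (1 <= k)%N ->
    riordan_entry g f n.+1 k =
      riordan_entry g f n k.-1
      + \sum_(j < n.+1) b j * riordan_entry g f (n - j)%N (k + j)%N.

Definition in_R02 (K : nzRingType) (g f : fps K) : Prop :=
  forall a : nat -> K, is_Aseq f a -> a 0%N = 1 /\ a 2%N = 0.

(* Main.v *)
Require Import Defs.
From mathcomp Require Import all_boot all_order all_algebra.
From mathcomp Require Import ring.
Import GRing.Theory.
Local Open Scope ring_scope.

Theorem theorem4p3 (K : numFieldType) (g f : fps K) :
  is_riordan g f ->
  (exists b : nat -> K, is_typeI_Bseq g f b) ->
  in_R02 g f.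
Proof.
move=> [g0 [f0 _]] [b hB] a [_ hA].
have h1 := hB 0%N 1%N isT.
have h2 := hB 1%N 1%N isT.
have h3 := hB 2%N 1%N isT.
have a1 := hA 0%N.
have a2 := hA 1%N.
have a3 := hA 2%N.
move: h1 h2 h3 a1 a2 a3; rewrite /riordan_entry /= /fps_mul /fps_one.
do 5?(rewrite ?big_ord_recr ?big_ord0 /= /subn /subn_rec /=).
rewrite !f0 !g0 !(mul0r, mulr0, add0r, addr0, mulr1, mul1r).
move=> e1; rewrite !e1 !(mul0r, mulr0, add0r, addr0, mulr1, mul1r).
move=> e2 e3 a1 a2 a3.
move: e3 a2 a3; rewrite /fps_mul /fps_one.
do 5?(rewrite ?big_ord_recr ?big_ord0 /= /subn /subn_rec /=).
rewrite !f0 !e1 !(mul0r, mulr0, add0r, addr0, mulr1, mul1r).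
move=> e3 a2 a3.
split; first by [].
have hb : b 0%N = f 2%N by apply: (addrI (g 1%N)); rewrite -e2 addrC.
rewrite hb in e3.
have h3 : f 3%N = f 2%N * f 2%N.
  have -> : f 3%N = (f 3%N + g 1%N * f 2%N + g 2%N) - g 1%N * f 2%N - g 2%N by ring.
  rewrite e3; ring.
have -> : a 2%N = f 3%N - a 1%N * f 2%N by rewrite a3; ring.
by rewrite h3 -a2 subrr.
Qed.
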